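(* Let $f$ be a perfect $2$-coloring of $H(n,q)$ with quotient matrix $\begin{pmatrix} a & b\\ c& d\end{pmatrix}$. If there exists a $1$-perfect code in $H(q+1,q)$, then there exists a perfect $2q$-coloring of $H(qn,q)$ with quotient matrix $T=(t_{i,j})_{i,j=1}^{2q}$, where $t_{i,j}=a$ for $i,j\le q$, $t_{i,j}=b$ for $i\le q<j$, $t_{i,j}=c$ for $j\le q<i$, and $t_{i,j}=d$ for $i,j>q$.
   Context: The Hamming graph $H(n,q)$ has vertex set $\mathbb{Z}_q^n$, two vertices adjacent iff they differ in exactly one coordinate. A perfect $k$-coloring is a surjective map from the vertex set onto $\{1,\dots,k\}$ such that every vertex of color $i$ has exactly $s_{i,j}$ neighbours of color $j$ (depending only on $i,j$); $(s_{i,j})$ is its quotient matrix. A $1$-perfect code in $H(n,q)$ is a set $C$ of vertices such that every radius-$1$ Hamming ball contains exactly one element of $C$. *)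

(* Defs.v *)
From mathcomp Require Import all_boot.
Set Implicit Arguments. Unset Strict Implicit. Unset Printing Implicit Defensive.

Definition hvert (n q : nat) := {ffun 'I_n -> 'I_q}.

Definition hdist (n q : nat) (x y : hvert n q) : nat := #|[set i | x i != y i]|.

Definition hadj (n q : nat) (x y : hvert n q) : bool := hdist x y == 1.

Definition perfect_coloring (n q k : nat) (f : hvert n q -> 'I_k)
  (S : 'I_k -> 'I_k -> nat) : Prop :=
  (forall j : 'I_k, exists x, f x = j) /\
  (forall (x : hvert n q) (j : 'I_k), #|[set y | hadj x y & f y == j]| = S (f x) j).

Definition perfect_code (n q : nat) (C : {set hvert n q}) : Prop :=
  forall x : hvert n q, #|[set y in C | hdist x y <= 1]| = 1.

(* Main.v *)
Require Import Defs.
From mathcomp Require Import all_boot all_algebra zify ring.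
Set Implicit Arguments. Unset Strict Implicit. Unset Printing Implicit Defensive.
Import GRing.Theory.

Lemma hadjP n q (x y : hvert n q) :
  reflect (exists m, x m != y m /\ forall r, r != m -> x r = y r) (hadj x y).
Proof.
apply: (iffP idP).
- rewrite /hadj /hdist => /cards1P [m Hm]; exists m; split.
  + have : m \in [set i | x i != y i] by rewrite Hm set11.
    by rewrite inE.
  + move=> r Hr; apply/eqP; apply: contraNT Hr => Hr.
    have : r \in [set i | x i != y i] by rewrite inE.
    by rewrite Hm inE.
- move=> [m [Hm Hr]]; rewrite /hadj /hdist; apply/cards1P; exists m.
  apply/setP => r; rewrite !inE; case: (eqVneq r m) => [->//|/Hr ->].
  by rewrite eqxx.
Qed.

Lemma dist1 n q (x y : hvert n q) i :
  (forall l, l != i -> x l = y l) -> hdist x y <= 1.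
Proof.
move=> H; rewrite /hdist -(cards1 i); apply: subset_leq_card.
apply/subsetP => l; rewrite !inE; apply: contraR => /H ->; by rewrite eqxx.
Qed.

Lemma dist1' n q (x y : hvert n.+1 q) :
  hdist x y <= 1 -> exists i, forall l, l != i -> x l = y l.
Proof.
rewrite /hdist leq_eqVlt ltnS leqn0 => /orP [/cards1P [i Hi]|/eqP/cards0_eq H0].
- exists i => l Hl; apply/eqP; apply: contraNT Hl => Hl.
  have : l \in [set i | x i != y i] by rewrite inE.
  by rewrite Hi inE.
- exists ord0 => l _; apply/eqP; apply: contraT => Hl.
  have : l \in [set i | x i != y i] by rewrite inE.
  by rewrite H0 inE.
Qed.

Lemma codeG n q (C : {set hvert n.+1 q}) (HC : perfect_code C) c c' i j :
  c \in C -> c' \in C -> (forall l, l != i -> l != j -> c l = c' l) -> c = c'.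
Proof.
move=> Hc Hc' H.
pose w : hvert n.+1 q := [ffun l => if l == i then c' l else c l].
have /eqP/cards1P [z Hz] := HC w.
have h1 : c \in [set y in C | hdist w y <= 1].
  rewrite inE Hc /=; apply: (dist1 (i := i)) => l Hl; by rewrite ffunE (negbTE Hl).
have h2 : c' \in [set y in C | hdist w y <= 1].
  rewrite inE Hc' /=; apply: (dist1 (i := j)) => l Hl; rewrite ffunE.
  by case: eqP => // /eqP Hli; apply: H.
by move: h1 h2; rewrite Hz !inE => /eqP -> /eqP ->.
Qed.

Lemma codeCov n q (C : {set hvert n.+1 q}) (HC : perfect_code C) (w : hvert n.+1 q) :
  exists c, c \in C /\ exists i, forall l, l != i -> w l = c l.
Proof.
have /eqP/cards1P [z Hz] := HC w.
have : z \in [set y in C | hdist w y <= 1] by rewrite Hz set11.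
by rewrite inE => /andP [Hz1 /dist1' Hz2]; exists z.
Qed.

Section RingPart.
Local Open Scope ring_scope.

Definition emb p (x : hvert p.+2 p.+2) (k t : 'I_p.+2) : hvert p.+3 p.+2 :=
  [ffun l => if unlift ord_max l is Some m then (if m == ord0 then x m - k else x m) else t].

Lemma emb_l p (x : hvert p.+2 p.+2) k t m :
  emb x k t (lift ord_max m) = if m == ord0 then x m - k else x m.
Proof. by rewrite ffunE liftK. Qed.

Lemma emb_m p (x : hvert p.+2 p.+2) k t : emb x k t ord_max = t.
Proof. by rewrite ffunE unlift_none. Qed.

Lemma lift_eqF p (m m' : 'I_p.+2) : (lift ord_max m == lift ord_max m') = (m == m').
Proof. exact: (inj_eq (@lift_inj _ _)). Qed.

Lemma lift_maxF p (m : 'I_p.+2) : (lift (@ord_max p.+2) m == @ord_max p.+2 :> 'I_p.+3) = false.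
Proof. by apply/negbTE; rewrite eq_sym neq_lift. Qed.

Lemma max_liftF p (m : 'I_p.+2) : (@ord_max p.+2 == lift (@ord_max p.+2) m :> 'I_p.+3) = false.
Proof. by rewrite eq_sym lift_maxF. Qed.

Definition upd p (w : hvert p.+3 p.+2) l v : hvert p.+3 p.+2 :=
  [ffun l' => if l' == l then v else w l'].

Lemma updE p (w : hvert p.+3 p.+2) l v l' : upd w l v l' = if l' == l then v else w l'.
Proof. by rewrite ffunE. Qed.

Lemma subKr' p (a b : 'I_p.+2) : a - (a - b) = b.
Proof. by rewrite opprB addrC subrK. Qed.




Lemma embU p (C : {set hvert p.+3 p.+2}) (HC : perfect_code C) x k t k' t' :
  emb x k t \in C -> emb x k' t' \in C -> k = k' /\ t = t'.
Proof.
move=> H1 H2.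
have E := codeG HC (i := lift ord_max ord0) (j := ord_max) H1 H2.
have {E} E : emb x k t = emb x k' t'.
  apply: E => l; case: (unliftP ord_max l) => [m ->|->]; last by rewrite eqxx.
  rewrite lift_eqF !emb_l => /negbTE -> //.
split.
- have := congr1 (fun w : hvert p.+3 p.+2 => w (lift ord_max ord0)) E.
  by rewrite /= !emb_l eqxx => /addrI /oppr_inj.
- by have := congr1 (fun w : hvert p.+3 p.+2 => w ord_max) E; rewrite /= !emb_m.
Qed.

Lemma kt_ex p (C : {set hvert p.+3 p.+2}) (HC : perfect_code C) x :
  exists kt : 'I_p.+2 * 'I_p.+2, emb x kt.1 kt.2 \in C.
Proof.
case: (pickP (fun kt : 'I_p.+2 * 'I_p.+2 => emb x kt.1 kt.2 \in C)) => [kt H|H0].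
  by exists kt.
exfalso.
pose P (kt mv : 'I_p.+2 * 'I_p.+2) :=
  (mv.1 != ord0) && (upd (emb x kt.1 kt.2) (lift ord_max mv.1) mv.2 \in C).
have Pex : forall kt, exists mv, P kt mv.
  move=> [k t]; have [c [Hc [i Hi]]] := codeCov HC (emb x k t).
  case: (unliftP ord_max i) => [m Em|Em]; subst i.
  - case: (eqVneq m ord0) => [Hm0|Hm0].
    + subst m.
      have Ec : c = emb x (x ord0 - c (lift ord_max ord0)) t.
        apply/ffunP => l; case: (unliftP ord_max l) => [m' ->|->].
        * rewrite emb_l; case: (eqVneq m' ord0) => [->|Hm'].
            by rewrite subKr'.
          by rewrite -Hi ?lift_eqF // emb_l (negbTE Hm').
        * by rewrite emb_m -Hi ?max_liftF // emb_m.
      by have := H0 (x ord0 - c (lift ord_max ord0), t); rewrite /= -Ec Hc.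
    + exists (m, c (lift ord_max m)); rewrite /P Hm0 /=.
      suff -> : upd (emb x k t) (lift ord_max m) (c (lift ord_max m)) = c by [].
      apply/ffunP => l; rewrite ffunE; case: eqP => [->//|/eqP Hl].
      by rewrite Hi.
  - have Ec : c = emb x k (c ord_max).
      apply/ffunP => l; case: (unliftP ord_max l) => [m' ->|->].
      * by rewrite -Hi ?lift_maxF // !emb_l.
      * by rewrite emb_m.
    by have := H0 (k, c ord_max); rewrite /= -Ec Hc.
pose Fn kt := odflt (ord0, ord0) [pick mv | P kt mv].
have FnP : forall kt, P kt (Fn kt).
  move=> kt; rewrite /Fn; case: pickP => [mv //|H].
  by have [mv Hmv] := Pex kt; have := H mv; rewrite Hmv.
have Finj : injective Fn.
  move=> [k t] [k' t'] EF; have := FnP (k, t); have := FnP (k', t').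
  rewrite /P -EF; case: (Fn (k, t)) => m v /= /andP [Hm H2] /andP [_ H1].
  have E := codeG HC (i := lift ord_max ord0) (j := ord_max) H1 H2.
  have {E} E : upd (emb x k t) (lift ord_max m) v = upd (emb x k' t') (lift ord_max m) v.
    apply: E => l; case: (unliftP ord_max l) => [m' ->|->]; last by rewrite eqxx.
    rewrite lift_eqF !updE => Hm0 _; case: ifP => // _; by rewrite !emb_l (negbTE Hm0).
  have E1 := congr1 (fun w : hvert p.+3 p.+2 => w (lift ord_max ord0)) E.
  have E2 := congr1 (fun w : hvert p.+3 p.+2 => w ord_max) E.
  move: E1 E2; rewrite /= !updE lift_eqF eq_sym (negbTE Hm) !emb_l eqxx.
  rewrite !(eq_sym ord_max) !lift_maxF !emb_m.
  by move=> /addrI /oppr_inj -> ->.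
have [g _ gK] := injF_bij Finj.
have := FnP (g (ord0, ord0)); rewrite gK /P /=.
by [].
Qed.

Lemma emb_lt p (x : hvert p.+2 p.+2) k t t' m :
  emb x k t (lift ord_max m) = emb x k t' (lift ord_max m).
Proof. by rewrite !emb_l. Qed.

Definition ktf p (C : {set hvert p.+3 p.+2}) (x : hvert p.+2 p.+2) : 'I_p.+2 * 'I_p.+2 :=
  odflt (ord0, ord0) [pick kt | emb x kt.1 kt.2 \in C].

Lemma ktfP p (C : {set hvert p.+3 p.+2}) (HC : perfect_code C) x :
  emb x (ktf C x).1 (ktf C x).2 \in C.
Proof.
rewrite /ktf; case: pickP => [kt //|H].
by have [kt Hkt] := kt_ex HC x; have := H kt; rewrite Hkt.
Qed.

Lemma ktf_eq p (C : {set hvert p.+3 p.+2}) (HC : perfect_code C) x k t :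
  emb x k t \in C -> ktf C x = (k, t).
Proof.
move=> H; have [E1 E2] := embU HC (ktfP HC x) H.
by rewrite -E1 -E2 -surjective_pairing.
Qed.

Lemma emb_inj p (x y : hvert p.+2 p.+2) u t : emb x u t = emb y u t -> x = y.
Proof.
move=> E; apply/ffunP => r.
have := congr1 (fun w : hvert p.+3 p.+2 => w (lift ord_max r)) E.
by rewrite /= !emb_l; case: ifP => // _ /addIr.
Qed.

Lemma latin p (C : {set hvert p.+3 p.+2}) (HC : perfect_code C) x y :
  hadj x y -> (ktf C x).1 != (ktf C y).1.
Proof.
move=> /hadjP [m [Hm Ho]]; apply/negP => /eqP Ek.
have H1 := ktfP HC x; have H2 := ktfP HC y; rewrite -Ek in H2.
have E := codeG HC (i := lift ord_max m) (j := ord_max) H1 H2.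
have {E} E : emb x (ktf C x).1 (ktf C x).2 = emb y (ktf C x).1 (ktf C y).2.
  apply: E => l; case: (unliftP ord_max l) => [m' ->|->]; last by rewrite eqxx.
  by rewrite (inj_eq (@lift_inj _ _)) !emb_l => Hm'; rewrite (Ho _ Hm').
have := congr1 (fun w : hvert p.+3 p.+2 => w (lift ord_max m)) E.
rewrite /= !emb_l; case: ifP => _; [move/addIr|]; by move=> Exy; rewrite Exy eqxx in Hm.
Qed.

Lemma nbP p (C : {set hvert p.+3 p.+2}) (HC : perfect_code C) x u t :
  u != (ktf C x).1 -> exists y, hadj x y /\ ktf C y = (u, t).
Proof.
move=> Hu; have [c [Hc [i Hi]]] := codeCov HC (emb x u t).
case: (unliftP ord_max i) => [m Em|Em]; subst i.
- pose y : hvert p.+2 p.+2 := [ffun r => if r == m then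
     (if m == ord0 then c (lift ord_max m) + u else c (lift ord_max m)) else x r].
  have Ey : emb y u t = c.
    apply/ffunP => l; case: (unliftP ord_max l) => [r ->|->].
    + rewrite emb_l ffunE; case: (eqVneq r m) => [->|Hr].
        by case: (m == ord0); rewrite ?addrK.
      by rewrite -Hi ?(inj_eq (@lift_inj _ _)) // emb_l.
    + by rewrite emb_m -Hi ?max_liftF // emb_m.
  have Ky : ktf C y = (u, t) by apply: (ktf_eq HC); rewrite Ey.
  exists y; split => //; apply/hadjP; exists m; split.
  + apply/negP => /eqP Exm.
    have Exy : x = y.
      apply/ffunP => r; case: (eqVneq r m) => [->//|Hr]; by rewrite ffunE (negbTE Hr).
    by move: Hu; rewrite Exy Ky eqxx.
  + by move=> r Hr; rewrite ffunE (negbTE Hr).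
- have Ec : c = emb x u (c ord_max).
    apply/ffunP => l; case: (unliftP ord_max l) => [m' ->|->].
    * have := Hi (lift ord_max m'); rewrite lift_maxF => /(_ isT) <-; exact: emb_lt.
    * by rewrite emb_m.
  by move: Hu; rewrite (ktf_eq HC (k := u) (t := c ord_max)) -?Ec // eqxx.
Qed.

Lemma injP p (C : {set hvert p.+3 p.+2}) (HC : perfect_code C) x y y' :
  hadj x y -> hadj x y' -> ktf C y = ktf C y' -> y = y'.
Proof.
move=> /hadjP [m [_ Hm]] /hadjP [m' [_ Hm']] E.
have H1 := ktfP HC y; have H2 := ktfP HC y'; rewrite -E in H2.
have E2 := codeG HC (i := lift ord_max m) (j := lift ord_max m') H1 H2.
apply: (emb_inj (u := (ktf C y).1) (t := (ktf C y).2)); apply: E2 => l.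
case: (unliftP ord_max l) => [r ->|->]; last by rewrite !emb_m.
rewrite !(inj_eq (@lift_inj _ _)) !emb_l => /Hm <- /Hm' <-; by [].
Qed.

End RingPart.

Lemma idx_lt p n (i : 'I_n) (r : 'I_p.+2) : i * p.+2 + r < p.+2 * n.
Proof. have := ltn_ord i; have := ltn_ord r; nia. Qed.

Definition idx p n (i : 'I_n) (r : 'I_p.+2) : 'I_(p.+2 * n) := Ordinal (idx_lt i r).

Lemma blk_lt p n (z : 'I_(p.+2 * n)) : z %/ p.+2 < n.
Proof. rewrite ltn_divLR //; have := ltn_ord z; lia. Qed.

Definition blk p n (z : 'I_(p.+2 * n)) : 'I_n := Ordinal (blk_lt z).
Definition off p n (z : 'I_(p.+2 * n)) : 'I_p.+2 := Ordinal (@ltn_pmod z p.+2 isT).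

Lemma blk_idx p n i r : blk (@idx p n i r) = i.
Proof. apply: val_inj => /=; rewrite divnMDl // divn_small //. by rewrite addn0. Qed.

Lemma off_idx p n i r : off (@idx p n i r) = r.
Proof. apply: val_inj => /=; by rewrite modnMDl modn_small. Qed.

Lemma idx_bo p n (z : 'I_(p.+2 * n)) : idx (blk z) (off z) = z.
Proof. apply: val_inj => /=; by rewrite -divn_eq. Qed.

Lemma decomp q a b j : 0 < q -> b < q ->
  (a * q + b == j) = (a == j %/ q) && (b == j %% q).
Proof.
move=> q0 bq; apply/eqP/andP => [<-|[/eqP -> /eqP ->]]; last by rewrite -divn_eq.
by rewrite divnMDl // divn_small // addn0 modnMDl modn_small.
Qed.

Definition bl p n (X : hvert (p.+2 * n) p.+2) (i : 'I_n) : hvert p.+2 p.+2 :=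
  [ffun r => X (idx i r)].
Definition updB p n (X : hvert (p.+2 * n) p.+2) (i : 'I_n) (y : hvert p.+2 p.+2)
  : hvert (p.+2 * n) p.+2 := [ffun z => if blk z == i then y (off z) else X z].

Lemma bl_updB p n (X : hvert (p.+2 * n) p.+2) i y i' :
  bl (updB X i y) i' = if i' == i then y else bl X i'.
Proof.
apply/ffunP => r; rewrite !ffunE blk_idx off_idx.
by case: eqP => // _; rewrite ffunE.
Qed.

Lemma bl_ext p n (X Y : hvert (p.+2 * n) p.+2) :
  (forall i, bl X i = bl Y i) -> X = Y.
Proof.
move=> H; apply/ffunP => z; rewrite -(idx_bo z).
by have := congr1 (fun w : hvert p.+2 p.+2 => w (off z)) (H (blk z)); rewrite /= !ffunE.
Qed.

Lemma adj_blk p n (X Y : hvert (p.+2 * n) p.+2) :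
  hadj X Y -> exists i, hadj (bl X i) (bl Y i) /\ forall i', i' != i -> bl X i' = bl Y i'.
Proof.
move=> /hadjP [z [Hz Ho]]; exists (blk z); split.
- apply/hadjP; exists (off z); split; first by rewrite !ffunE idx_bo.
  move=> r Hr; rewrite !ffunE; apply: Ho; apply: contra Hr => /eqP <-.
  by rewrite off_idx.
- move=> i' Hi; apply/ffunP => r; rewrite !ffunE; apply: Ho.
  by apply: contra Hi => /eqP <-; rewrite blk_idx.
Qed.

Lemma adj_updB p n (X : hvert (p.+2 * n) p.+2) i y :
  hadj (bl X i) y -> hadj X (updB X i y).
Proof.
move=> /hadjP [m [Hm Ho]]; apply/hadjP; exists (idx i m); split.
- by rewrite ffunE blk_idx off_idx eqxx; rewrite ffunE in Hm.
- move=> z Hz; rewrite ffunE; case: eqP => // Ez.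
  have Hzm : off z != m.
    apply: contra Hz => /eqP Ez'; apply/eqP; by rewrite -Ez -Ez' idx_bo.
  by rewrite -(Ho _ Hzm) ffunE -Ez idx_bo.
Qed.

Definition col p (j : 'I_(2 * p.+2)) : 'I_2 := inord (j %/ p.+2).
Definition soff p (j : 'I_(2 * p.+2)) : 'I_p.+2 := Ordinal (@ltn_pmod j p.+2 isT).

Lemma col_val p (j : 'I_(2 * p.+2)) : val (col j) = j %/ p.+2.
Proof. rewrite /col /= inordK // ltnS -ltnS ltn_divLR //; have := ltn_ord j; lia. Qed.

Lemma g_lt p (a : 'I_2) (b : 'I_p.+2) : a * p.+2 + b < 2 * p.+2.
Proof. have := ltn_ord a; have := ltn_ord b; nia. Qed.

Definition mkg p (a : 'I_2) (b : 'I_p.+2) : 'I_(2 * p.+2) := Ordinal (g_lt a b).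

Lemma mkgE p a b (j : 'I_(2 * p.+2)) : (mkg a b == j) = (a == col j) && (b == soff j).
Proof.
have -> : (mkg a b == j) = (a * p.+2 + b == j) by [].
rewrite decomp //; congr (_ && _).
- by apply/eqP/eqP => [E|E]; [apply: val_inj; rewrite col_val | rewrite E col_val].
Qed.

Lemma col_mkg p a b : col (@mkg p a b) = a.
Proof. by have := mkgE a b (mkg a b); rewrite eqxx => /esym/andP [/eqP <- _]. Qed.



Section LiftPart.
Local Open Scope ring_scope.
Lemma lift_main p n (f : hvert n p.+2 -> 'I_2) (S : 'I_2 -> 'I_2 -> nat)
  (KT : hvert p.+2 p.+2 -> 'I_p.+2 * 'I_p.+2)
  (Hlat : forall x y, hadj x y -> (KT x).1 != (KT y).1)
  (Hnb : forall x u t, u != (KT x).1 -> exists y, hadj x y /\ KT y = (u, t))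
  (Hinj : forall x y y', hadj x y -> hadj x y' -> KT y = KT y' -> y = y')
  (Hf : perfect_coloring f S) :
  exists g : hvert (p.+2 * n) p.+2 -> 'I_(2 * p.+2),
    perfect_coloring g (fun i j => S (col i) (col j)).
Proof.
case: Hf => Hsurj Hcnt.
pose Phi (X : hvert (p.+2 * n) p.+2) : hvert n p.+2 := [ffun i => (KT (bl X i)).1].
pose sig (X : hvert (p.+2 * n) p.+2) : 'I_p.+2 := \sum_i (KT (bl X i)).2.
pose g X := mkg (f (Phi X)) (sig X).
have sigE : forall X Y i, (forall i', i' != i -> bl X i' = bl Y i') ->
   sig Y - (KT (bl Y i)).2 = sig X - (KT (bl X i)).2.
  move=> X Y i H; rewrite /sig (bigD1 i) //= [in RHS](bigD1 i) //=.
  rewrite [X in _ = _ + X - _](eq_bigr (fun i' => (KT (bl Y i')).2)); last by move=> i' /H ->.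
  by rewrite addrAC subrr add0r [RHS]addrAC subrr add0r.
have gE : forall Y j, (g Y == j) = (f (Phi Y) == col j) && (sig Y == soff j).
  by move=> Y j; rewrite mkgE.
exists g; split.
- move=> j; have [z0 Hz0] := Hsurj (col j).
  have [n0|npos] := posnP n.
    exfalso; have [x Hx] := Hsurj ord0; have [y Hy] := Hsurj (@Ordinal 2%N 1%N isT).
    have Exy : x = y by apply/ffunP => r; exfalso; have := ltn_ord r; lia.
    by move: Hx; rewrite Exy Hy.
  pose i0 : 'I_n := Ordinal npos.
  have allKT : forall u t, exists w, KT w = (u, t).
    move=> u t; pose w0 : hvert p.+2 p.+2 := [ffun _ => ord0].
    case: (eqVneq u (KT w0).1) => [Eu|Hu]; last first.
      by have [y [_ Hy]] := Hnb w0 u t Hu; exists y.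
    have H1 : u + 1 != (KT w0).1.
      by rewrite -Eu -subr_eq0 [u + 1]addrC addrK oner_eq0.
    have [w1 [_ Hw1]] := Hnb w0 (u + 1) 0 H1.
    have H2 : u != (KT w1).1.
      by rewrite Hw1 /= eq_sym -subr_eq0 [u + 1]addrC addrK oner_eq0.
    by have [w [_ Hw]] := Hnb w1 u t H2; exists w.
  pose wsel u t := odflt [ffun _ => ord0] [pick w | KT w == (u, t)].
  have wselP : forall u t, KT (wsel u t) = (u, t).
    move=> u t; rewrite /wsel; case: pickP => [w /eqP //|H].
    by have [w Hw] := allKT u t; have := H w; rewrite Hw eqxx.
  pose X : hvert (p.+2 * n) p.+2 :=
    [ffun zz => wsel (z0 (blk zz)) (if blk zz == i0 then soff j else 0) (off zz)].
  have blX : forall i, bl X i = wsel (z0 i) (if i == i0 then soff j else 0).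
    by move=> i; apply/ffunP => r; rewrite !ffunE blk_idx off_idx.
  exists X; apply/eqP; rewrite gE; apply/andP; split.
  + have -> : Phi X = z0 by apply/ffunP => i; rewrite ffunE blX wselP.
    by rewrite Hz0.
  + rewrite /sig (eq_bigr (fun i => if i == i0 then soff j else 0)); last first.
      by move=> i _; rewrite blX wselP.
    by rewrite -big_mkcond big_pred1_eq.
- move=> X j; rewrite /g col_mkg -Hcnt.
  rewrite -(card_in_imset (f := Phi)).
  + apply: eq_card => z; apply/imsetP/idP.
    * case=> Y; rewrite inE => /andP [HY Hg] ->; rewrite inE.
      have [i [Hi Ho]] := adj_blk HY.
      move: Hg; rewrite gE => /andP [-> _]; rewrite andbT.
      apply/hadjP; exists i; split; first by rewrite !ffunE; exact: Hlat.
      by move=> i' Hi'; rewrite !ffunE Ho.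
    * rewrite inE => /andP [/hadjP [i [Hi Ho]] Hfz].
      have Hu : z i != (KT (bl X i)).1 by rewrite eq_sym; move: Hi; rewrite ffunE.
      pose tt := (KT (bl X i)).2 + (soff j - sig X).
      have [y [Hy HKy]] := Hnb _ (z i) tt Hu.
      have EY : Phi (updB X i y) = z.
        apply/ffunP => i'; rewrite ffunE bl_updB; case: eqP => [->|/eqP Hi'].
          by rewrite HKy.
        by rewrite -(Ho _ Hi') ffunE.
      exists (updB X i y) => //; rewrite inE adj_updB //= gE EY Hfz /=.
      have Hbl : forall i', i' != i -> bl X i' = bl (updB X i y) i'.
        by move=> i' Hi'; rewrite bl_updB (negbTE Hi').
      have E := sigE X (updB X i y) i Hbl.
      rewrite bl_updB eqxx HKy /= in E.
      have -> : sig (updB X i y) = sig X - (KT (bl X i)).2 + tt by rewrite -E subrK.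
      by rewrite /tt addrA subrK addrC subrK.
  + move=> Y Y'; rewrite !inE => /andP [HY Hg] /andP [HY' Hg'] EP.
    have [i [Hi Ho]] := adj_blk HY; have [i' [Hi' Ho']] := adj_blk HY'.
    have Eii : i' = i.
      apply/eqP; apply: contraT => Hne.
      have := congr1 (fun w : hvert n p.+2 => w i') EP.
      rewrite /= !ffunE -(Ho i' Hne) => E.
      by have := Hlat _ _ Hi'; rewrite E eqxx.
    subst i'.
    have E1 : (KT (bl Y i)).1 = (KT (bl Y' i)).1.
      by have := congr1 (fun w : hvert n p.+2 => w i) EP; rewrite /= !ffunE.
    have E2 : (KT (bl Y i)).2 = (KT (bl Y' i)).2.
      have e1 := sigE X Y i Ho; have e2 := sigE X Y' i Ho'.
      move: Hg Hg'; rewrite !gE => /andP [_ /eqP s1] /andP [_ /eqP s2].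
      rewrite s1 in e1; rewrite s2 in e2; rewrite -e2 in e1.
      by move/addrI/oppr_inj: e1.
    have Eb : bl Y i = bl Y' i.
      apply: (Hinj _ _ _ Hi Hi').
      by move: E1 E2; case: (KT (bl Y i)) => a b; case: (KT (bl Y' i)) => a' b' /= -> ->.
    apply: bl_ext => i'; case: (eqVneq i' i) => [->//|H].
    by rewrite -Ho // -Ho'.
Qed.

End LiftPart.

Lemma col0 p (i : 'I_(2 * p.+2)) : (val (col i) == 0) = (val i < p.+2).
Proof.
rewrite col_val; case: (ltnP i p.+2) => H; first by rewrite divn_small.
by rewrite -leqn0 leqNgt divn_gt0 // H.
Qed.

Theorem lemma8 (n q : nat) (f : hvert n q -> 'I_2) (a b c d : nat) :
  perfect_coloring f (fun i j : 'I_2 =>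
    if val i == 0 then (if val j == 0 then a else b)
    else (if val j == 0 then c else d)) ->
  (exists C : {set hvert q.+1 q}, perfect_code C) ->
  exists g : hvert (q * n) q -> 'I_(2 * q),
    perfect_coloring g (fun i j : 'I_(2 * q) =>
      if val i < q then (if val j < q then a else b)
      else (if val j < q then c else d)).
Proof.
move=> Hf [C HC].
have q2 : 1 < q.
  have [x Hx] := Hf.1 ord0; have [y Hy] := Hf.1 (@Ordinal 2 1 isT).
  have /existsP [i Hi] : [exists i, x i != y i].
    apply: contraT; rewrite negb_exists => /forallP H.
    have Exy : x = y by apply/ffunP => i; apply/eqP; have := H i; rewrite negbK.
    by move: Hx; rewrite Exy Hy.
  rewrite ltnNge; apply/negP => Hq.
  have E : x i = y i by apply: ord_inj; have := ltn_ord (x i); have := ltn_ord (y i); lia.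
  by rewrite E eqxx in Hi.
have [p Ep] : exists p, q = p.+2 by exists q.-2; lia.
subst q.
have [g Hg] := lift_main (latin HC) (nbP HC) (injP HC) Hf.
exists g; case: Hg => Hs Hc; split => // x j.
by rewrite Hc !col0.
Qed.
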